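(* For $n\ge2$ and $u_1,\dots,u_n\in\mathcal B$, $\langle X(u_1)\cdots X(u_n)\Omega,\Omega\rangle_{\gamma,\phi}=\sum_{\pi\in\mathrm{NC}_{ns}(n)}\langle W_M(\pi)\Omega,\Omega\rangle_{\gamma,\phi}$, and for $n=1$, $\langle X(u_1)\Omega,\Omega\rangle_{\gamma,\phi}=0$.
   Context: Let $\mathcal B$ be a unital $*$-algebra with star-linear maps $\phi:\mathcal B\to\mathbb C$, $\gamma:\mathcal B\to\mathcal B$, $\Lambda:\mathcal B\otimes_{alg}\mathcal B\to\mathcal B$, where $\phi$ is positive and faithful and $\gamma+\phi$ is completely positive, with $(\gamma+\phi)[b]:=\gamma[b]+\phi[b]1_{\mathcal B}$. Assume $\phi[v^*\Lambda(b\otimes u)]=\phi[\Lambda(b^*\otimes v)^*u]$ and $\gamma[v^*\Lambda(b\otimes u)]=\gamma[\Lambda(b^*\otimes v)^*u]$ for all $b,u,v$. On $\mathcal F_{alg}(\mathcal B)=\mathbb C\Omega\oplus\bigoplus_{n\ge1}\mathcal B^{\otimes n}$ use the form $\langle\Omega,\Omega\rangle_{\gamma,\phi}=1$, $\langle u_1\otimes\cdots\otimes u_n,v_1\otimes\cdots\otimes v_k\rangle_{\gamma,\phi}=\delta_{n=k}\phi[v_n^*(\gamma+\phi)[v_{n-1}^*\cdots(\gamma+\phi)[v_1^*u_1]\cdots u_{n-1}]u_n]$. For $b\in\mathcal B$ define operators on $\mathcal F_{alg}(\mathcal B)$: $a^+(b)\Omega=b$, $a^+(b)(u_1\otimes\cdots\otimes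 u_n)=b\otimes u_1\otimes\cdots\otimes u_n$; $a^-(b)\Omega=0$, $a^-(b)u_1=\phi[bu_1]\Omega$, $a^-(b)(u_1\otimes\cdots\otimes u_n)=(\gamma+\phi)[bu_1]u_2\otimes\cdots\otimes u_n$ for $n\ge2$; $a^0(b)\Omega=0$, $a^0(b)(u_1\otimes\cdots\otimes u_n)=\Lambda(b\otimes u_1)\otimes u_2\otimes\cdots\otimes u_n$; and $X(b)=a^+(b)+a^-(b)+a^0(b)$. $\mathrm{NC}(n)$ is the set of noncrossing partitions of $\{1,\dots,n\}$; $\mathrm{NC}_{ns}(n)$ those with no singleton blocks. In a block, the smallest element is opening, the largest closing, others middle. For $\pi\in\mathrm{NC}_{ns}(n)$, $W_M(\pi)=a_1(u_1)a_2(u_2)\cdots a_n(u_n)$ where $a_i=a^-$ if $i$ is opening, $a^+$ if $i$ is closing, $a^0$ if $i$ is middle. *)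

(* Defs.v *)
From HB Require Import structures.
From mathcomp Require Import all_boot all_order all_algebra.
From mathcomp Require Import complex Rstruct.
Set Implicit Arguments.
Unset Strict Implicit.
Unset Printing Implicit Defensive.
Import Order.TTheory GRing.Theory Num.Theory.
Local Open Scope ring_scope.

Definition CC : numClosedFieldType := (Rdefinitions.R)[i].

Section FockSpace.

Variable B : algType CC.

Definition is_star (star : B -> B) : Prop :=
  [/\ involutive star,
      forall a b : B, star (a + b) = star a + star b,
      forall (c : CC) (b : B), star (c *: b) = (c^*)%C *: star b
    & forall a b : B, star (a * b) = star b * star a].

Definition star_linear_functional (star : B -> B) (phi : B -> CC) : Prop :=
  [/\ forall a b, phi (a + b) = phi a + phi b,
      forall (c : CC) b, phi (c *: b) = c * phi b
    & forall b, phi (star b) = (phi b)^*%C].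

Definition star_linear_map (star : B -> B) (g : B -> B) : Prop :=
  [/\ forall a b, g (a + b) = g a + g b,
      forall (c : CC) b, g (c *: b) = c *: g b
    & forall b, g (star b) = star (g b)].

(* A linear map Lambda : B (x)_alg B -> B is the same as a bilinear map
   B -> B -> B; star on B (x) B is (b (x) u)^* = b^* (x) u^*. *)
Definition star_bilinear_map (star : B -> B) (Lam : B -> B -> B) : Prop :=
  [/\ forall a a' u, Lam (a + a') u = Lam a u + Lam a' u,
      forall a u u', Lam a (u + u') = Lam a u + Lam a u',
      forall (c : CC) a u, Lam (c *: a) u = c *: Lam a u,
      forall (c : CC) a u, Lam a (c *: u) = c *: Lam a u
    & forall a u, Lam (star a) (star u) = star (Lam a u)].

Definition positive_functional (star : B -> B) (phi : B -> CC) : Prop :=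
  forall b, 0 <= phi (star b * b).

Definition faithful_functional (star : B -> B) (phi : B -> CC) : Prop :=
  forall b, phi (star b * b) = 0 -> b = 0.

Definition mxstar (star : B -> B) m (X : 'M[B]_m) : 'M[B]_m :=
  \matrix_(i, j) star (X j i).

Definition positive_mx (star : B -> B) m (A : 'M[B]_m) : Prop :=
  exists s : seq 'M[B]_m, A = \sum_(X <- s) (mxstar star X *m X).

Definition completely_positive (star : B -> B) (Psi : B -> B) : Prop :=
  forall m (A : 'M[B]_m), positive_mx star A -> positive_mx star (map_mx Psi A).

(* (gamma + phi)[b] := gamma[b] + phi[b] 1_B *)
Definition gpp (gamma : B -> B) (phi : B -> CC) (b : B) : B :=
  gamma b + phi b *: 1.

(* ---------- the algebraic full Fock space ----------
   An element of F_alg(B) is represented as a formal finite linear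
   combination of words: the word [::] is Omega, the word [:: u1; ...; un]
   is the elementary tensor u1 (x) ... (x) un.  All operators and the form
   are defined on words and extended (sesqui)linearly. *)
Definition fvec := seq (CC * seq B).

Definition Omega : fvec := [:: (1, [::])].

(* the form on two words of equal length n >= 1:
   phi[v_n^* (g+p)[v_{n-1}^* ... (g+p)[v_1^* u_1] ... u_{n-1}] u_n] *)
Fixpoint form_acc (star : B -> B) (gamma : B -> B) (phi : B -> CC)
    (acc : B) (us vs : seq B) : CC :=
  match us, vs with
  | u :: us', v :: vs' =>
      form_acc star gamma phi (star v * gpp gamma phi acc * u) us' vs'
  | _, _ => phi acc
  end.

Definition form_word (star : B -> B) (gamma : B -> B) (phi : B -> CC)
    (us vs : seq B) : CC :=
  if size us != size vs then 0 else
  match us, vs with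
  | u :: us', v :: vs' => form_acc star gamma phi (star v * u) us' vs'
  | _, _ => 1
  end.

(* <xi, eta>_{gamma,phi}, linear in xi, conjugate linear in eta *)
Definition fock_form (star : B -> B) (gamma : B -> B) (phi : B -> CC)
    (xi eta : fvec) : CC :=
  \sum_(p <- xi) \sum_(q <- eta) p.1 * (q.1)^*%C * form_word star gamma phi p.2 q.2.

Definition lin_ext (op : seq B -> fvec) (xi : fvec) : fvec :=
  flatten [seq [seq (p.1 * q.1, q.2) | q <- op p.2] | p <- xi].

Definition aplus (b : B) (w : seq B) : fvec := [:: (1, b :: w)].

Definition aminus (gamma : B -> B) (phi : B -> CC) (b : B) (w : seq B) : fvec :=
  match w with
  | [::] => [::]
  | [:: u1] => [:: (phi (b * u1), [::])]
  | u1 :: u2 :: rest => [:: (1, (gpp gamma phi (b * u1) * u2) :: rest)]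
  end.

Definition azero (Lam : B -> B -> B) (b : B) (w : seq B) : fvec :=
  match w with
  | [::] => [::]
  | u1 :: rest => [:: (1, Lam b u1 :: rest)]
  end.

Definition Xop gamma phi Lam (b : B) (w : seq B) : fvec :=
  aplus b w ++ aminus gamma phi b w ++ azero Lam b w.

Definition Xprod gamma phi Lam n (u : 'I_n -> B) : fvec :=
  foldr (fun i xi => lin_ext (Xop gamma phi Lam (u i)) xi) Omega (enum 'I_n).

End FockSpace.
Arguments Omega {B}.

Section NC.

Variable n : nat.

Definition noncrossing (P : {set {set 'I_n}}) : bool :=
  [forall B1 in P, forall B2 in P, (B1 != B2) ==>
     ~~ [exists a : 'I_n, exists b : 'I_n, exists c : 'I_n, exists d : 'I_n,
          [&& (a < b)%N, (b < c)%N, (c < d)%N,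
              a \in B1, c \in B1, b \in B2 & d \in B2]]].

Definition no_singleton (P : {set {set 'I_n}}) : bool :=
  [forall B1 in P, (1 < #|B1|)%N].

(* NC(n): noncrossing partitions of {1..n} (here indexed by 'I_n);
   NC_ns(n): those without singleton blocks *)
Definition is_NC (P : {set {set 'I_n}}) : bool :=
  partition P [set: 'I_n] && noncrossing P.

Definition is_NCns (P : {set {set 'I_n}}) : bool :=
  is_NC P && no_singleton P.

Definition is_opening (P : {set {set 'I_n}}) (i : 'I_n) : bool :=
  [forall j in pblock P i, (i <= j)%N].

Definition is_closing (P : {set {set 'I_n}}) (i : 'I_n) : bool :=
  [forall j in pblock P i, (j <= i)%N].

End NC.

Definition WM_Omega (B : algType CC) (gamma : B -> B) (phi : B -> CC)
    (Lam : B -> B -> B) n (P : {set {set 'I_n}}) (u : 'I_n -> B) : fvec B :=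
  foldr (fun i xi =>
           lin_ext (if is_opening P i then aminus gamma phi (u i)
                    else if is_closing P i then aplus (u i)
                    else azero Lam (u i)) xi)
        (@Omega B) (enum 'I_n).

(* Main.v *)
Require Import Defs.
From HB Require Import structures.
From mathcomp Require Import all_boot all_order all_algebra.
From mathcomp Require Import complex Rstruct.
From mathcomp Require Import zify.
Import Order.TTheory GRing.Theory Num.Theory.
Set Implicit Arguments.
Unset Strict Implicit.
Definition o0 : 'I_3 := @Ordinal 3 0 isT.
Definition o1 : 'I_3 := @Ordinal 3 1 isT.
Definition o2 : 'I_3 := @Ordinal 3 2 isT.

Definition lab n (P : {set {set 'I_n}}) (i : 'I_n) : 'I_3 :=
  if is_opening P i then o0 else if is_closing P i then o1 else o2.

Local Open Scope ring_scope.
Definition wt (t : 'I_3) : int :=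
  if val t == 0%N then 1 else if val t == 1%N then -1 else 0.
Definition Dseq (ls : seq 'I_3) : int := - \sum_(t <- ls) wt t.
Fixpoint good (ls : seq 'I_3) : bool :=
  match ls with
  | [::] => true
  | t :: ls' => [&& good ls', 0 <= Dseq ls & (val t != 1%N) ==> (1 <= Dseq ls')]
  end.
Lemma Dseq_cons t ls : Dseq (t :: ls) = Dseq ls - wt t.
Proof. by rewrite /Dseq big_cons opprD addrC. Qed.
Definition validl (ls : seq 'I_3) := (Dseq ls == 0) && good ls.
Local Close Scope ring_scope.

Lemma wt_cases (t : 'I_3) :
  [\/ (val t = 0 /\ wt t = 1%R), (val t = 1 /\ wt t = (-1)%R) | (val t = 2 /\ wt t = 0%R)].
Proof. by case: t => [[|[|[|m]]] Ht] //=; [apply: Or31|apply: Or32|apply: Or33]. Qed.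

Lemma good_drop l j : good l -> good (drop j l).
Proof.
elim: l j => [|t l IH] [|j] //= /and3P [H _ _]; exact: IH.
Qed.

Section Constr.
Variable n : nat.
Variable c : 'I_n -> 'I_3.
Let ls := map c (enum 'I_n).
Hypothesis Hv : validl ls.

Definition D (j : nat) : int := Dseq (drop j ls).

Lemma size_ls : size ls = n.
Proof. by rewrite size_map size_enum_ord. Qed.

Lemma D0 : D 0 = 0%R.
Proof. by move: Hv => /andP [/eqP H _]; rewrite /D drop0. Qed.

Lemma Dn : D n = 0%R.
Proof. by rewrite /D drop_oversize ?size_ls // /Dseq big_nil. Qed.

Lemma drop_i (i : 'I_n) : drop i ls = c i :: drop i.+1 ls.
Proof.
rewrite (drop_nth o0) ?size_ls //; congr (_ :: _).
by rewrite /ls (nth_map i) ?size_enum_ord // nth_ord_enum.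
Qed.

Lemma Dstep (i : 'I_n) : D i.+1 = (D i + wt (c i))%R.
Proof. rewrite /D drop_i Dseq_cons; lia. Qed.

Lemma Dgood (i : 'I_n) : (0 <= D i)%R /\ (val (c i) != 1 -> (1 <= D i.+1)%R).
Proof.
have := good_drop i (proj2 (andP Hv)); rewrite drop_i /= => /and3P [_ H1 H2].
split; first by rewrite /D drop_i.
by move=> H; move: H2; rewrite H.
Qed.

Lemma Dnonneg j : j <= n -> (0 <= D j)%R.
Proof.
rewrite leq_eqVlt => /orP [/eqP ->|jn]; first by rewrite Dn.
exact: (proj1 (Dgood (Ordinal jn))).
Qed.

Lemma Dnonop (i : 'I_n) : val (c i) != 0 -> (1 <= D i)%R.
Proof.
move=> H; have := Dstep i; have [_ H2] := Dgood i.
have := Dnonneg (ltn_ord i).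
case: (wt_cases (c i)) => [[E W]|[E W]|[E W]]; rewrite W.
- by rewrite E in H.
- lia.
- rewrite E in H2; have := H2 isT; lia.
Qed.

Definition assign (j : 'I_n) : nat :=
  if val (c j) == 0 then val j else \max_(k < j | (D k < D j)%R) k.

Lemma assign_opener (j : 'I_n) : val (c j) == 0 -> assign j = j.
Proof. by rewrite /assign => ->. Qed.

Lemma aspec (j : 'I_n) : val (c j) != 0 ->
  [/\ assign j < j, (D (assign j) < D j)%R &
      forall k, assign j < k -> k <= j -> (D j <= D k)%R].
Proof.
move=> H; have Dj := Dnonop H.
have j0 : 0 < j.
  case: (posnP j) => [E|//]; move: Dj; rewrite E D0; lia.
have card : 0 < #|[pred k : 'I_j | (D k < D j)%R]|.
  apply/card_gt0P; exists (Ordinal j0); rewrite inE /= D0; lia.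
have [k0 kin Hk] := eq_bigmax_cond (@nat_of_ord j) card.
have E : assign j = k0 by rewrite /assign (negbTE H) -Hk.
rewrite E; split; [exact: ltn_ord | by move: kin; rewrite inE | ].
move=> k k0k kj; rewrite leNgt; apply/negP => Hlt.
have kj' : k < j.
  rewrite ltn_neqAle kj andbT; apply/eqP => kjE; move: Hlt; rewrite kjE; lia.
have := @leq_bigmax_cond _ [pred k : 'I_j | (D k < D j)%R] (@nat_of_ord j) (Ordinal kj').
rewrite inE /= => /(_ Hlt); rewrite Hk /=; lia.
Qed.

Lemma aspec2 (j : 'I_n) (H : val (c j) != 0) (Ha : assign j < n) :
  val (c (Ordinal Ha)) = 0 /\ D j = (D (assign j) + 1)%R.
Proof.
have [aj Daj Hk] := aspec H.
have := Dstep (Ordinal Ha) => /= Ds.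
have := Hk (assign j).+1 (ltnSn _) aj.
case: (wt_cases (c (Ordinal Ha))) => [[E W]|[E W]|[E W]]; rewrite W in Ds;
  rewrite Ds; try lia.
move=> _; split => //; have := Hk (assign j).+1 (ltnSn _) aj; lia.
Qed.

Lemma assign_le (j : 'I_n) : assign j <= j.
Proof.
case: (boolP (val (c j) == 0)) => H; first by rewrite assign_opener.
by have [/ltnW ? _ _] := aspec H.
Qed.

Lemma assign_ltn (j : 'I_n) : assign j < n.
Proof. exact: leq_ltn_trans (assign_le j) (ltn_ord j). Qed.

Lemma nonop_of_lt (j : 'I_n) : assign j < j -> val (c j) != 0.
Proof.
by apply: contraTN => H; rewrite assign_opener // ltnn.
Qed.

Lemma assign_uniq (j : 'I_n) a : val (c j) != 0 -> a < j -> (D a < D j)%R ->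
  (forall k, a < k -> k <= j -> (D j <= D k)%R) -> assign j = a.
Proof.
move=> H aj Da Hk; have [a'j Da' Hk'] := aspec H.
case: (ltngtP a (assign j)) => [lt|lt|//].
  have := Hk (assign j) lt (ltnW a'j); lia.
have := Hk' a lt (ltnW aj); lia.
Qed.

Lemma extend (i : 'I_n) : val (c i) != 1 ->
  exists j : 'I_n, i < j /\ assign j = assign i.
Proof.
move=> Hi.
set a := assign i; set t := D a.
have [Di1 Hk] : D i.+1 = (t + 1)%R /\ (forall k, a < k -> k <= i.+1 -> (t + 1 <= D k)%R).
  case: (boolP (val (c i) == 0)) => Hop.
    have Ea : a = i by rewrite /a assign_opener.
    have Ds := Dstep i.
    case: (wt_cases (c i)) => [[E W]|[E W]|[E W]]; rewrite W in Ds;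
      try (by move: Hop; rewrite E).
    rewrite /t Ea Ds; split => // k ik ki.
    have -> : k = i.+1 by lia.
    by rewrite Ds.
  have [ai Dai Hk'] := aspec Hop.
  have [_ Dia] := aspec2 Hop (assign_ltn i).
  have Ds := Dstep i.
  case: (wt_cases (c i)) => [[E W]|[E W]|[E W]]; rewrite W in Ds;
    try (by move: Hop Hi; rewrite E).
  rewrite -/a in Dia; rewrite /t Ds Dia addr0; split => // k ak ki.
  case: (ltngtP k i.+1) => [lt|lt|->].
  - have := Hk' k ak (lt : k < i.+1); lia.
  - lia.
  - by rewrite Ds Dia addr0.
have t0 : (0 <= t)%R by apply: Dnonneg; exact: ltnW (assign_ltn i).
have exm : exists m, (i < m) && (D m <= t)%R.
  exists n; rewrite ltn_ord Dn; lia.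
case: (ex_minnP exm) => m /andP [im Dm] minm.
have m1 : i.+1 < m.
  rewrite ltn_neqAle im andbT; apply/eqP => E; move: Dm; rewrite -E Di1; lia.
have mn : m <= n by apply: minm; rewrite ltn_ord Dn.
have jn : m.-1 < n by lia.
set J := Ordinal jn.
have DJ : (t + 1 <= D m.-1)%R.
  rewrite leNgt; apply/negP => H.
  have : m <= m.-1 by apply: minm; apply/andP; split; lia.
  lia.
have Ds : D m = (D m.-1 + wt (c J))%R.
  by have := Dstep J; rewrite /= prednK //; lia.
have HJ : val (c J) = 1 /\ D m.-1 = (t + 1)%R.
  case: (wt_cases (c J)) => [[E W]|[E W]|[E W]]; rewrite W in Ds; try lia.
case: HJ => EJ DJ'.
exists J; split; first by rewrite /J /=; lia.
apply: assign_uniq; first by rewrite EJ.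
- have := assign_le i; rewrite /J /=; lia.
- rewrite /= DJ' /t; lia.
- move=> k ak kJ; rewrite /= DJ'.
  case: (leqP k i.+1) => ki; first exact: Hk.
  rewrite leNgt; apply/negP => H.
  have : m <= k by apply: minm; apply/andP; split; [lia | lia].
  move: kJ; rewrite /J /=; lia.
Qed.


Definition Pc := preim_partition assign [set: 'I_n].

Lemma Pc_part : partition Pc [set: 'I_n].
Proof. exact: preim_partitionP. Qed.

Lemma inPc x y : (y \in pblock Pc x) = (assign x == assign y).
Proof.
have eqiR : {in [set: 'I_n] & &, equivalence_rel (fun x y => assign x == assign y)}.
  by move=> x1 y1 z1 _ _ _; split => // /eqP ->.
exact: (pblock_equivalence_partition eqiR) (in_setT x) (in_setT y).
Qed.

Lemma assignA (x : 'I_n) : val (c x) != 0 -> assign (Ordinal (assign_ltn x)) = assign x.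
Proof.
move=> H; have [E _] := aspec2 H (assign_ltn x).
by rewrite assign_opener /= ?E.
Qed.

Lemma Pc_open (i : 'I_n) : is_opening Pc i = (val (c i) == 0).
Proof.
case: (boolP (val (c i) == 0)) => H.
  apply/forall_inP => j; rewrite inPc assign_opener // => /eqP ->.
  exact: assign_le.
apply/negbTE/forall_inPn; exists (Ordinal (assign_ltn i)).
  by rewrite inPc assignA.
have [ai _ _] := aspec H; rewrite -ltnNge; exact: ai.
Qed.

Lemma Pc_close (i : 'I_n) : is_closing Pc i = (val (c i) == 1).
Proof.
case: (boolP (val (c i) == 1)) => H.
  apply/forall_inP => j; rewrite inPc => /eqP Ea.
  rewrite leqNgt; apply/negP => ij.
  have Hi : val (c i) != 0 by rewrite (eqP H).
  have [ai _ _] := aspec Hi.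
  have Hj : val (c j) != 0 by apply: nonop_of_lt; rewrite -Ea; lia.
  have [_ _ Hkj] := aspec Hj.
  have [_ Dj] := aspec2 Hj (assign_ltn j).
  have [_ Di] := aspec2 Hi (assign_ltn i).
  have Ds := Dstep i.
  case: (wt_cases (c i)) => [[E W]|[E W]|[E W]]; rewrite W in Ds;
    try (by move: H; rewrite E).
  have := Hkj i.+1 ltac:(rewrite -Ea; lia) ij.
  rewrite -Ea in Dj; lia.
have [j [ij Ej]] := extend H.
apply/negbTE/forall_inPn; exists j; first by rewrite inPc Ej.
by rewrite -ltnNge.
Qed.

Lemma Pc_lab (i : 'I_n) : lab Pc i = c i.
Proof.
rewrite /lab Pc_open Pc_close; apply: val_inj.
by case: (wt_cases (c i)) => [[E _]|[E _]|[E _]]; rewrite E.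
Qed.

Lemma Pc_nosing : no_singleton Pc.
Proof.
have /and3P [_ tI n0] := Pc_part.
apply/forall_inP => B BP.
have /set0Pn [x xB] : B != set0 by apply: contraNneq n0 => <-.
rewrite -(def_pblock tI BP xB); apply/card_gt1P.
case: (boolP (val (c x) == 1)) => H.
  have Hx : val (c x) != 0 by rewrite (eqP H).
  exists x, (Ordinal (assign_ltn x)); split.
  - by rewrite inPc.
  - by rewrite inPc assignA.
  - apply/eqP => /(congr1 val) /= E; have [ai _ _] := aspec Hx; lia.
have [j [ij Ej]] := extend H.
exists x, j; split; first by rewrite inPc.
- by rewrite inPc Ej.
- by apply/eqP => E; move: ij; rewrite E ltnn.
Qed.

Lemma Pc_nc : noncrossing Pc.
Proof.
have /and3P [_ tI _] := Pc_part.
apply/forall_inP => B1 B1P; apply/forall_inP => B2 B2P; apply/implyP => NE.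
apply/negP => /existsP [a /existsP [b /existsP [c' /existsP [d]]]].
move=> /and4P [ab bc cd /and4P [aB1 cB1 bB2 dB2]].
move: cB1 dB2 NE; rewrite -(def_pblock tI B1P aB1) -(def_pblock tI B2P bB2).
rewrite !inPc => /eqP Ec /eqP Ed NE.
have Nab : assign a != assign b.
  apply: contraNneq NE => Eab; apply/eqP/setP => y; rewrite !inPc Eab //.
have Hc : val (c c') != 0 by apply: nonop_of_lt; have := assign_le a; lia.
have Hd : val (c d) != 0 by apply: nonop_of_lt; have := assign_le b; lia.
have [_ _ Kc] := aspec Hc; have [_ _ Kd] := aspec Hd.
have [_ Dc] := aspec2 Hc (assign_ltn c'); have [_ Dd] := aspec2 Hd (assign_ltn d).
rewrite -Ec in Kc Dc; rewrite -Ed in Kd Dd.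
have la := assign_le a; have lb := assign_le b.
case: (ltngtP (assign a) (assign b)) => [lt|lt|E]; last by rewrite E eqxx in Nab.
  have := Kc (assign b) lt ltac:(lia); have := Kd c' ltac:(lia) ltac:(lia); lia.
have Hb : val (c b) != 0 by apply: nonop_of_lt; lia.
have [_ Db] := aspec2 Hb (assign_ltn b).
have := Kc b ltac:(lia) ltac:(lia); have := Kd (assign a) lt ltac:(lia); lia.
Qed.

Lemma Pc_NCns : is_NCns Pc.
Proof. by rewrite /is_NCns /is_NC Pc_part Pc_nc Pc_nosing. Qed.

End Constr.

Section NCfacts.
Variable n : nat.
Variable P : {set {set 'I_n}}.
Hypothesis HP : is_NCns P.

Definition same (i j : 'I_n) := j \in pblock P i.

Lemma partP : partition P [set: 'I_n].
Proof. by move: HP => /andP [/andP [H _] _]. Qed.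

Lemma coverP x : x \in cover P.
Proof. by have /and3P [/eqP -> _ _] := partP; rewrite inE. Qed.

Lemma tiP : trivIset P.
Proof. by have /and3P [_ -> _] := partP. Qed.

Lemma same_refl i : same i i.
Proof. by rewrite /same mem_pblock coverP. Qed.

Lemma same_sym i j : same i j -> same j i.
Proof.
rewrite /same => H; rewrite (same_pblock tiP H); exact: same_refl.
Qed.

Lemma same_trans i j k : same i j -> same j k -> same i k.
Proof.
rewrite /same => H1 H2; by rewrite -(same_pblock tiP H1).
Qed.

Lemma op_cl i : is_opening P i -> is_closing P i -> False.
Proof.
move=> /forall_inP Ho /forall_inP Hc.
move: HP => /andP [_ /forall_inP /(_ _ (pblock_mem (coverP i)))].
move=> /card_gt1P [x [y [xin yin xy]]].
have := Ho x xin; have := Hc x xin; have := Ho y yin; have := Hc y yin.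
move: xy => /eqP xy ????; apply: xy; apply: val_inj => /=; lia.
Qed.

Lemma opE i : is_opening P i = (lab P i == o0).
Proof. by rewrite /lab; case: (is_opening P i); case: (is_closing P i). Qed.

Lemma clE i : is_closing P i = (lab P i == o1).
Proof.
rewrite /lab; case E1: (is_opening P i); case E2: (is_closing P i) => //.
by case: (op_cl E1 E2).
Qed.

Lemma nc_same (a b c d : 'I_n) : a < b -> b < c -> c < d ->
  same a c -> same b d -> same a b.
Proof.
move=> ab bc cd ac bd.
case: (boolP (pblock P a == pblock P b)) => [/eqP E|NE].
  by rewrite /same E; exact: same_refl.
have Hnc : noncrossing P by case/andP: HP => /andP [].
move: Hnc => /forall_inP /(_ _ (pblock_mem (coverP a))).
move=> /forall_inP /(_ _ (pblock_mem (coverP b))) /implyP /(_ NE) /negP.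
case; apply/existsP; exists a; apply/existsP; exists b; apply/existsP; exists c.
apply/existsP; exists d; rewrite ab bc cd.
by rewrite -[c \in _]/(same a c) -[d \in _]/(same b d) ac bd !mem_pblock !coverP.
Qed.

End NCfacts.

Section Inj.
Variable n : nat.
Variables P Q : {set {set 'I_n}}.
Hypotheses (HP : is_NCns P) (HQ : is_NCns Q).
Hypothesis Hl : forall i, lab P i = lab Q i.

Lemma inj_step (i j : 'I_n) : i < j ->
  (forall i' j' : 'I_n, i' < j' -> j' - i' < j - i -> same P i' j' = same Q i' j') ->
  same P i j -> same Q i j.
Proof.
move=> ij IH Pij.
case: (boolP [exists k : 'I_n, [&& i < k, k < j & same P i k]]) =>
    [/existsP [k /and3P [ik kj Pik]] | Hno].
  apply: (same_trans HQ (j := k)).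
    by rewrite -IH //; lia.
  rewrite -IH //; last by lia.
  apply: (same_trans HP (same_sym HP Pik) Pij).
case: (boolP (same Q i j)) => // nQij; exfalso.
have nclP : ~~ is_closing P i.
  by apply/forall_inPn; exists j => //; rewrite -ltnNge.
have nopP : ~~ is_opening P j.
  by apply/forall_inPn; exists i; [exact: (same_sym HP Pij) | rewrite -ltnNge].
rewrite (clE HP) Hl -(clE HQ) in nclP.
rewrite (opE P) Hl -(opE Q) in nopP.
move/forall_inPn: nclP => [s sin]; rewrite -ltnNge => is_.
move/forall_inPn: nopP => [r rin]; rewrite -ltnNge => rj.
have js : j < s.
  case: (ltngtP s j) => [sj|//|/val_inj sj].
    case/negP: Hno; apply/existsP; exists s; rewrite is_ sj /=.
    by rewrite IH //; lia.
  by case/negP: nQij; rewrite -sj /same sin.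
have ri : r < i.
  case: (ltngtP r i) => [//|ir|/val_inj ri].
    case/negP: Hno; apply/existsP; exists r; rewrite ir rj /=.
    have : same P r j by rewrite IH //; [exact: (same_sym HQ rin) | lia].
    by move=> H; apply: (same_trans HP Pij (same_sym HP H)).
  by case/negP: nQij; rewrite -ri; exact: (same_sym HQ rin).
have := nc_same HQ ri ij js (same_sym HQ rin) sin => Hri.
by move/negP: nQij; apply; apply: (same_trans HQ (same_sym HQ Hri) (same_sym HQ rin)).
Qed.

End Inj.

Lemma inj_NCns n (P Q : {set {set 'I_n}}) : is_NCns P -> is_NCns Q ->
  (forall i, lab P i = lab Q i) -> P = Q.
Proof.
move=> HP HQ Hl.
have key : forall g (i j : 'I_n), i < j -> j - i <= g -> same P i j = same Q i j.
  elim=> [|g IH] i j ij; first by lia.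
  move=> hg; apply/idP/idP.
    apply: inj_step => // i' j' ij' h; apply: IH => //; lia.
  apply: (inj_step HQ HP (fun k => esym (Hl k))) => //.
  move=> i' j' ij' h; symmetry; apply: IH => //; lia.
have all_ij : forall i j : 'I_n, same P i j = same Q i j.
  move=> i j; case: (ltngtP i j) => [ij|ji|/val_inj ->].
  - exact: key ij (leqnn _).
  - have K := key _ _ _ ji (leqnn _).
    apply/idP/idP => H.
      apply: (same_sym HQ); rewrite -K; exact: (same_sym HP H).
    apply: (same_sym HP); rewrite K; exact: (same_sym HQ H).
  - by rewrite !same_refl.
rewrite -(equivalence_partition_pblock (partP HP)).
rewrite -(equivalence_partition_pblock (partP HQ)).
apply: eq_imset => x; apply/setP => y; rewrite !inE.
exact: all_ij.
Qed.

Local Open Scope ring_scope.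

Section Ev.
Variable B : algType CC.
Variables (gamma : B -> B) (phi : B -> CC) (Lam : B -> B -> B).

Definition ev (L : seq B -> CC) (xi : fvec B) : CC := \sum_(p <- xi) p.1 * L p.2.

Lemma ev_cat L xs ys : ev L (xs ++ ys) = ev L xs + ev L ys.
Proof. by rewrite /ev big_cat. Qed.

Lemma ev_lin L op xi : ev L (lin_ext op xi) = ev (fun w => ev L (op w)) xi.
Proof.
rewrite /ev /lin_ext big_flatten big_map; apply: eq_bigr => p _.
rewrite big_map mulr_sumr; apply: eq_bigr => q _ /=; by rewrite mulrA.
Qed.

Lemma ev_Omega L : ev L Omega = L [::].
Proof. by rewrite /ev big_seq1 mul1r. Qed.

Lemma ev_sumL (I : finType) (G : I -> seq B -> CC) xi :
  ev (fun w => \sum_i G i w) xi = \sum_i ev (G i) xi.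
Proof.
rewrite /ev exchange_big /=; apply: eq_bigr => p _; by rewrite mulr_sumr.
Qed.

Definition op (t : 'I_3) (b : B) : seq B -> fvec B :=
  if val t == 0%N then aminus gamma phi b
  else if val t == 1%N then aplus b else azero Lam b.

Definition Wc n (c : 'I_n -> 'I_3) (u : 'I_n -> B) : fvec B :=
  foldr (fun i xi => lin_ext (op (c i) (u i)) xi) Omega (enum 'I_n).

Lemma foldr_ext (T R : Type) (f g : T -> R -> R) z s :
  (forall i x, f i x = g i x) -> foldr f z s = foldr g z s.
Proof. by move=> H; elim: s => //= a s ->. Qed.

Lemma Wc_ext n (c c' : 'I_n -> 'I_3) u : c =1 c' -> Wc c u = Wc c' u.
Proof. by move=> H; apply: foldr_ext => i x; rewrite H. Qed.

Lemma Xop_sum L b w :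
  ev L (Xop gamma phi Lam b w) = \sum_(t < 3) ev L (op t b w).
Proof.
rewrite /Xop !ev_cat !big_ord_recl big_ord0 addr0 /op /= addrA.
by rewrite addrA (addrC (ev L (aplus b w))).
Qed.

Lemma sum_ffunS (T : finType) n (H : T -> {ffun 'I_n -> T} -> CC) :
  \sum_(c : {ffun 'I_n.+1 -> T}) H (c ord0) [ffun i => c (lift ord0 i)] =
  \sum_(t : T) \sum_(c : {ffun 'I_n -> T}) H t c.
Proof.
rewrite pair_big /=.
pose h (c : {ffun 'I_n.+1 -> T}) := (c ord0, [ffun i => c (lift ord0 i)]).
pose h' (p : T * {ffun 'I_n -> T}) : {ffun 'I_n.+1 -> T} :=
  [ffun i => if unlift ord0 i is Some j then p.2 j else p.1].
rewrite (reindex h') /=; last first.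
  exists h => [p _|c _].
    case: p => t c; rewrite /h /h' /= ffunE unlift_none; congr (_, _).
    by apply/ffunP => j; rewrite !ffunE liftK.
  apply/ffunP => i; rewrite /h /h' ffunE /=.
  by case: unliftP => [j ->|->]; rewrite ?ffunE.
apply: eq_bigr => [[t c]] _; rewrite /h' /= ffunE unlift_none; congr H.
by apply/ffunP => j; rewrite !ffunE liftK.
Qed.

Lemma expand n (u : 'I_n -> B) L :
  ev L (Xprod gamma phi Lam u) = \sum_(c : {ffun 'I_n -> 'I_3}) ev L (Wc c u).
Proof.
elim: n u L => [|n IH] u L.
  rewrite (big_pred1 [ffun i => ord0]); first by rewrite /Xprod /Wc enum_ord0.
  by move=> c; symmetry; apply/eqP/ffunP => -[].
rewrite /Xprod enum_ordSl /= foldr_map -/(Xprod gamma phi Lam (u \o lift ord0)).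
rewrite ev_lin.
have -> : ev (fun w => ev L (Xop gamma phi Lam (u ord0) w))
    (Xprod gamma phi Lam (u \o lift ord0)) =
  ev (fun w => \sum_(t < 3) ev L (op t (u ord0) w))
    (Xprod gamma phi Lam (u \o lift ord0)).
  by apply: eq_bigr => p _; rewrite Xop_sum.
rewrite ev_sumL.
pose H (t : 'I_3) (c : {ffun 'I_n -> 'I_3}) :=
  ev (fun w => ev L (op t (u ord0) w)) (Wc c (u \o lift ord0)).
rewrite (eq_bigr (fun t => \sum_c H t c)); last by move=> t _; rewrite IH.
rewrite -(sum_ffunS H); apply: eq_bigr => c _.
rewrite /H /Wc enum_ordSl /= foldr_map ev_lin; congr ev.
by apply: foldr_ext => i x /=; rewrite ffunE.
Qed.

Definition vacL (w : seq B) : CC := if w is [::] then 1 else 0.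

Lemma fock_vac star xi : fock_form star gamma phi xi Omega = ev vacL xi.
Proof.
rewrite /fock_form /ev; apply: eq_bigr => p _.
rewrite big_seq1 conjc1 mulr1; congr (_ * _).
by case: p => k [|x w].
Qed.

Lemma part_one star u1 :
  fock_form star gamma phi (lin_ext (Xop gamma phi Lam u1) Omega) Omega = 0.
Proof. by rewrite fock_vac /ev /= big_seq1 /= mulr0. Qed.


Definition Wseq (ts : seq ('I_3 * B)) : fvec B :=
  foldr (fun p xi => lin_ext (op p.1 p.2) xi) Omega ts.

Lemma Wseq_spec ts q : q \in Wseq ts ->
  ((size q.2)%:Z = Dseq (map fst ts)) /\ good (map fst ts).
Proof.
elim: ts q => [|[t b] ts IH] q /=.
  by rewrite inE => /eqP -> /=; rewrite /Dseq big_nil.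
move=> /flattenP [s /mapP [p pin ->]] /mapP [q' q'in ->] /=.
have [Hs Hg] := IH p pin.
rewrite Dseq_cons Hg /=.
case: p pin Hs q'in => k w /= _ Hs.
case: t => [[|[|[|m]]] Ht] //=; rewrite /op /wt /=.
- case: w Hs => [|u1 [|u2 rest]] //= Hs; rewrite inE => /eqP -> /=;
  rewrite -Hs; lia.
- rewrite inE => /eqP -> /=; rewrite -Hs; lia.
- case: w Hs => [|u1 rest] //= Hs; rewrite inE => /eqP -> /=; rewrite -Hs; lia.
Qed.


Lemma Wc_Wseq n (c : 'I_n -> 'I_3) u :
  Wc c u = Wseq [seq (c i, u i) | i <- enum 'I_n].
Proof. by rewrite /Wseq foldr_map. Qed.

Lemma vac_invalid n (c : 'I_n -> 'I_3) u :
  ~~ validl (map c (enum 'I_n)) -> ev vacL (Wc c u) = 0.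
Proof.
move=> Hv; rewrite Wc_Wseq /ev big_seq big1 // => q qin.
have [Hs Hg] := Wseq_spec qin.
have E : [seq p.1 | p <- [seq (c i, u i) | i <- enum 'I_n]] = map c (enum 'I_n).
  by rewrite -map_comp.
move: Hs Hg Hv; rewrite E /validl.
case: q qin => k [|x w] /= _; last by rewrite mulr0.
by move=> <- ->.
Qed.


Lemma WM_Wc n (P : {set {set 'I_n}}) u :
  WM_Omega gamma phi Lam P u = Wc (lab P) u.
Proof.
apply: foldr_ext => i x; rewrite /lab /op.
by case: (is_opening P i); case: (is_closing P i).
Qed.

End Ev.

Theorem proposition3p2
  (B : algType CC) (star : B -> B) (phi : B -> CC) (gamma : B -> B)
  (Lam : B -> B -> B)
  (Hstar : is_star star)
  (Hphi : star_linear_functional star phi)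
  (Hgamma : star_linear_map star gamma)
  (HLam : star_bilinear_map star Lam)
  (Hphi_pos : positive_functional star phi)
  (Hphi_faithful : faithful_functional star phi)
  (Hcp : completely_positive star (gpp gamma phi))
  (HphiLam : forall b u v : B,
     phi (star v * Lam b u) = phi (star (Lam (star b) v) * u))
  (HgammaLam : forall b u v : B,
     gamma (star v * Lam b u) = gamma (star (Lam (star b) v) * u)) :
  (forall (n : nat) (u : 'I_n -> B), (2 <= n)%N ->
     fock_form star gamma phi (Xprod gamma phi Lam u) Omega
     = \sum_(P : {set {set 'I_n}} | is_NCns P)
         fock_form star gamma phi (WM_Omega gamma phi Lam P u) Omega)
  /\
  (forall u1 : B,
     fock_form star gamma phi (lin_ext (Xop gamma phi Lam u1) Omega) Omega = 0).
Proof.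
split; last exact: part_one.
move=> n u _.
rewrite fock_vac expand.
under [RHS]eq_bigr do rewrite fock_vac WM_Wc.
rewrite (bigID (fun c : {ffun 'I_n -> 'I_3} => validl (map c (enum 'I_n)))) /=.
rewrite [X in _ + X]big1 ?addr0; last by move=> c Hc; apply: vac_invalid.
pose h := fun P : {set {set 'I_n}} => [ffun i => lab P i].
pose h' := fun c : {ffun 'I_n -> 'I_3} => Pc c.
rewrite (reindex_onto h h'); last first.
  by move=> c Hc; apply/ffunP => i; rewrite /h /h' ffunE Pc_lab.
have Eh : forall P, Wc gamma phi Lam (h P) u = Wc gamma phi Lam (lab P) u.
  by move=> P; apply: Wc_ext => i; rewrite /h ffunE.
have Em : forall P, map (h P) (enum 'I_n) = map (lab P) (enum 'I_n).
  by move=> P; apply: eq_map => i; rewrite /h ffunE.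
rewrite (bigID (fun P => validl (map (lab P) (enum 'I_n))) (fun P => is_NCns P)) /=.
rewrite [X in _ = _ + X]big1 ?addr0; last first.
  by move=> P /andP [_ Hc]; apply: vac_invalid.
rewrite (eq_bigr (fun P => ev (@vacL B) (Wc gamma phi Lam (lab P) u))); last first.
  by move=> P _; rewrite Eh.
apply: eq_bigl => P; rewrite Em.
case: (boolP (validl (map (lab P) (enum 'I_n)))) => Hv; rewrite ?andbF ?andbT //=.
have Hv' : validl (map (h P) (enum 'I_n)) by rewrite Em.
apply/eqP/idP => [<-|HP]; first exact: Pc_NCns.
apply: inj_NCns => //; first exact: Pc_NCns.
by move=> i; rewrite /h' (Pc_lab Hv') /h ffunE.
Qed.
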